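(* Let $\Gamma=(\mathcal{G},\mathcal{I},\boldsymbol{c})$ be a nonatomic routing game and suppose there is $\beta\in\mathbb{R}_+$ such that every edge $e\in\mathcal{E}$ has a BPR-type cost function $c_e(x)=t_e+a_e x^{\beta}$ with $t_e,a_e\in\mathbb{R}_+$. Let $\boldsymbol{\tau}\in\mathbb{R}^{\mathcal{E}}$ be a toll vector such that $$\sum_{e\in p}\Bigl(\tau_e+\tfrac{\beta}{\beta+1}t_e\Bigr)\le \sum_{e\in p'}\Bigl(\tau_e+\tfrac{\beta}{\beta+1}t_e\Bigr)$$ for all $i\in\mathcal{I}$, all $p\in\mathcal{P}^{*i}$ and all $p'\in\mathcal{P}^i$. Then $\boldsymbol{\tau}$ is a demand-independent optimal toll (DIOT) for $\Gamma$.
   Context: A nonatomic routing game $\Gamma=(\mathcal{G},\mathcal{I},\boldsymbol{c})$ consists of a finite directed multigraph $\mathcal{G}=(\mathcal{V},\mathcal{E})$, a finite set $\mathcal{I}$ of origin-destination (OD) pairs $i$, each with origin $o^i\in\mathcal{V}$ and destination $d^i\in\mathcal{V}$, and for each edge $e$ a nondecreasing continuous cost function $c_e:\mathbb{R}_+\to\mathbb{R}_+$. $\mathcal{P}^i$ is the set of simple directed $o^i$–$d^i$ paths, $\mathcal{P}=\bigcup_i\mathcal{P}^i$. For a demand vector $\boldsymbol{\mu}\in\mathbb{R}_+^{\mathcal{I}}$, the feasible flows are $\mathcal{F}(\boldsymbol{\mu})=\{\boldsymbol{f}\in\mathbb{R}_+^{\mathcal{P}}:\sum_{p\in\mathcal{P}^i}f_p=\mu^i\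 \forall i\}$; the load on $e$ is $x_e=\sum_{p\ni e}f_p$, and the path cost is $c_p(\boldsymbol{f})=\sum_{e\in p}c_e(x_e)$. A flow $\boldsymbol{f}\in\mathcal{F}(\boldsymbol{\mu})$ is a Wardrop equilibrium if for all $i$ and all $p,p'\in\mathcal{P}^i$ with $f_p>0$, $c_p(\boldsymbol{f})\le c_{p'}(\boldsymbol{f})$. The total cost is $L(\boldsymbol{f})=\sum_{p}f_pc_p(\boldsymbol{f})$; a system optimum for $\boldsymbol{\mu}$ is a minimizer of $L$ over $\mathcal{F}(\boldsymbol{\mu})$. $\mathcal{P}^{*i}$ is the set of paths $p\in\mathcal{P}^i$ such that $f^*_p(\boldsymbol{\mu})>0$ for some demand vector $\boldsymbol{\mu}$ and some corresponding system optimum $\boldsymbol{f}^*(\boldsymbol{\mu})$. For a toll vector $\boldsymbol{\tau}\in\mathbb{R}^{\mathcal{E}}$ (entries may be negative), $\Gamma^{\boldsymbol{\tau}}$ is the game with edge costs $c_e(x)+\tau_e$. A toll vector $\boldsymbol{\tau}$ is a demand-independent optimal toll (DIOT) for $\Gamma$ if for every demand vector $\boldsymbol{\mu}\in\mathbb{R}_+^{\mathcal{I}}$, every Wardrop equilibrium of $\Gamma^{\boldsymbol{\tau}}$ with demand $\boldsymbol{\mu}$ is a system optimum of $\Gamma$ for demand $\boldsymbol{\mu}$ (i.e., minimizes $L$, computed with the untolled costs, over $\mathcal{F}(\boldsymbol{\mu})$). *)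

(* Defs.v *)
From HB Require Import structures.
From mathcomp Require Import all_boot all_order all_algebra.
From mathcomp Require Import all_classical all_reals exp.
Set Implicit Arguments. Unset Strict Implicit. Unset Printing Implicit Defensive.
Import Order.TTheory GRing.Theory Num.Theory.
Local Open Scope ring_scope.

Section Routing.
Variables (R : realType) (V E I : finType)
          (src dst : E -> V) (orig dest : I -> V).

Fixpoint is_walk (u v : V) (p : seq E) : bool :=
  match p with
  | [::] => u == v
  | e :: p' => (src e == u) && is_walk (dst e) v p'
  end.

Definition is_simple_path (u v : V) (p : seq E) : bool :=
  is_walk u v p && uniq (u :: map dst p).

Definition short_seqs : seq (seq E) :=
  flatten [seq [seq tval t | t <- enum {: k.-tuple E}] | k <- iota 0 #|E|.+1].

(* P^i : the (finite) set of simple o^i - d^i paths, as an explicit list.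
   (A simple path has distinct edges, hence length <= #|E|.) *)
Definition paths (i : I) : seq (seq E) :=
  [seq p <- short_seqs | is_simple_path (orig i) (dest i) p].

(* A flow assigns to each OD pair i and each path p the flow f i p of
   commodity i on p (only values for p in paths i matter). *)
Definition feasible (mu : I -> R) (f : I -> seq E -> R) : Prop :=
  (forall i p, p \in paths i -> 0 <= f i p) /\
  (forall i, \sum_(p <- paths i) f i p = mu i).

Definition load (f : I -> seq E -> R) (e : E) : R :=
  \sum_(i : I) \sum_(p <- paths i | e \in p) f i p.

Definition path_cost (c : E -> R -> R) (f : I -> seq E -> R) (p : seq E) : R :=
  \sum_(e <- p) c e (load f e).

Definition total_cost (c : E -> R -> R) (f : I -> seq E -> R) : R :=
  \sum_(i : I) \sum_(p <- paths i) f i p * path_cost c f p.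

Definition wardrop (c : E -> R -> R) (mu : I -> R) (f : I -> seq E -> R) : Prop :=
  feasible mu f /\
  forall i p p', p \in paths i -> p' \in paths i -> 0 < f i p ->
    path_cost c f p <= path_cost c f p'.

Definition system_optimum (c : E -> R -> R) (mu : I -> R) (f : I -> seq E -> R)
  : Prop :=
  feasible mu f /\ forall g, feasible mu g -> total_cost c f <= total_cost c g.

Definition Pstar (c : E -> R -> R) (i : I) (p : seq E) : Prop :=
  p \in paths i /\
  exists (mu : I -> R) (f : I -> seq E -> R),
    (forall j, 0 <= mu j) /\ system_optimum c mu f /\ 0 < f i p.

Definition tolled (c : E -> R -> R) (tau : E -> R) : E -> R -> R :=
  fun e x => c e x + tau e.

Definition DIOT (c : E -> R -> R) (tau : E -> R) : Prop :=
  forall (mu : I -> R), (forall i, 0 <= mu i) ->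
  forall f, wardrop (tolled c tau) mu f -> system_optimum c mu f.

End Routing.

(* BPR-type cost c_e(x) = t_e + a_e x^beta  (powR: 0 `^ 0 = 1) *)
Definition bpr (R : realType) (E : Type) (t a : E -> R) (beta : R) : E -> R -> R :=
  fun e x => t e + a e * powR x beta.

(* Main.v *)
Require Import Defs.
From HB Require Import structures.
From mathcomp Require Import all_boot all_order all_algebra.
From mathcomp Require Import all_classical all_reals exp.
From mathcomp Require Import all_analysis.
From mathcomp.algebra_tactics Require Import ring lra.
Import Order.TTheory GRing.Theory Num.Theory numFieldNormedType.Exports.
Local Open Scope ring_scope.
Section Cont.
Variable R : realType.

Lemma powRabs_cont (b : R) : 0 <= b -> continuous (fun x : R => powR `|x| b).
Proof.
move=> b0 x.
have [->|bn0] := eqVneq b 0.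
  rewrite (_ : (fun x : R => _) = fun=> 1); first exact: cst_continuous.
  by apply: funext => y; rewrite powRr0.
have [x0|xn0] := eqVneq x 0.
  apply/cvgrPdist_lt => e e0.
  have d0 : 0 < powR e b^-1 by rewrite powR_gt0.
  have H := near_ball x _ d0.
  apply: filterS H => y; rewrite /ball /= x0 sub0r normrN => hy.
  rewrite normr0 powR0 // sub0r normrN ger0_norm ?powR_ge0 //.
  have := @gt0_ltr_powR R b _ _ _ _ _ hy.
  rewrite -powRrM mulVf // powRr1 ?(ltW e0) //; apply.
  - by rewrite lt_neqAle eq_sym bn0.
  - by rewrite nnegrE.
  - by rewrite nnegrE powR_ge0.
pose g := fun y : R => expR (b * ln `|y|).
have c1 : {for x, continuous (fun y : R => `|y|)} by exact: norm_continuous.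
have c2 : {for `|x|, continuous (@ln R)} by apply: continuous_ln; rewrite normr_gt0.
have c3 : {for x, continuous (fun y : R => ln `|y|)}.
  exact: (continuous_comp c1 c2).
have c4 : {for x, continuous (fun y : R => b * ln `|y|)}.
  exact: (continuous_comp c3 (@mulrl_continuous _ b _)).

have gc : {for x, continuous g}.
  exact: (continuous_comp c4 (@continuous_expR _ _)).
have gx : powR `|x| b = g x by rewrite /powR /g normr_eq0 (negbTE xn0).
have H : \forall y \near x, `|x - y| < `|x| by apply: near_ball; rewrite normr_gt0.
have H2 : {near x, g =1 (fun y : R => powR `|y| b)}.
  apply: filterS H => y hy.
  rewrite /g /powR normr_eq0; case: eqP => // y0.
  by move: hy; rewrite y0 subr0 ltxx.
rewrite /continuous_at gx.
exact: cvg_trans (near_eq_cvg H2) gc.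
Qed.

Lemma contD (T0 : topologicalType) (f g : T0 -> R) :
  continuous f -> continuous g -> continuous (fun v => f v + g v).
Proof. move=> hf hg v; exact: (@continuousD _ _ _ f g v (hf v) (hg v)). Qed.

Lemma contM (T0 : topologicalType) (f g : T0 -> R) :
  continuous f -> continuous g -> continuous (fun v => f v * g v).
Proof. move=> hf hg v; exact: (@continuousM _ _ f g v (hf v) (hg v)). Qed.

Lemma cont_sum (T0 : topologicalType) (X : Type) (s : seq X) (P : pred X)
  (F : X -> T0 -> R) : (forall x, continuous (F x)) ->
  continuous (fun v => \sum_(x <- s | P x) F x v).
Proof.
move=> hF; elim: s => [|y s IH].
  rewrite (_ : (fun v => _) = fun=> 0); first exact: cst_continuous.
  by apply: funext => v; rewrite big_nil.
rewrite (_ : (fun v => _) = (fun v => (if P y then F y v else 0) + \sum_(x <- s | P x) F x v)).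
  move=> v; apply: (@continuousD _ _ _ (fun v => if P y then F y v else 0)); last exact: IH.
  by case: (P y); [exact: hF | exact: cst_continuous].
by apply: funext => v; rewrite big_cons; case: (P y); rewrite ?add0r.
Qed.
End Cont.

Section Comb.
Variables (R : realType) (V E I : finType) (src dst : E -> V) (orig dest : I -> V).
Local Notation paths := (paths src dst orig dest).
Local Notation load := (@load R _ _ _ src dst orig dest).
Local Notation total_cost := (@total_cost R _ _ _ src dst orig dest).
Local Notation path_cost := (@path_cost R _ _ _ src dst orig dest).
Local Notation feasible := (@feasible R _ _ _ src dst orig dest).

Lemma path_uniq {i p} : p \in paths i -> uniq p.
Proof.
rewrite mem_filter => /andP[/andP[_ hu] _].
by move: hu; rewrite cons_uniq => /andP[_ /map_uniq].
Qed.

Lemma path_short {i p} : p \in paths i -> p \in short_seqs E.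
Proof. by rewrite mem_filter => /andP[]. Qed.

Lemma sum_uniq (r : seq E) (F : E -> R) :
  uniq r -> \sum_(e <- r) F e = \sum_e (if e \in r then F e else 0).
Proof.
move=> ur; rewrite -big_mkcond -big_enum /=; apply: perm_big.
by rewrite uniq_perm ?enum_uniq // => e; rewrite mem_enum.
Qed.

Lemma edge_exch (h : I -> seq E -> R) (k : E -> R) :
  \sum_i \sum_(p <- paths i) h i p * \sum_(e <- p) k e = \sum_e k e * load h e.
Proof.
transitivity (\sum_i \sum_(p <- paths i) \sum_e (if e \in p then h i p * k e else 0)).
  apply: eq_bigr => i _; rewrite big_seq [RHS]big_seq; apply: eq_bigr => p hp.
  by rewrite mulr_sumr (sum_uniq _ _ (path_uniq hp)).
rewrite (eq_bigr (fun i => \sum_e \sum_(p <- paths i) (if e \in p then h i p * k e else 0)));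
  last by move=> i _; exact: exchange_big.
rewrite exchange_big; apply: eq_bigr => e _.
rewrite /Defs.load mulr_sumr; apply: eq_bigr => i _.
rewrite mulr_sumr [RHS]big_mkcond; apply: eq_bigr => p _.
by case: (e \in p); rewrite ?mulr0 // mulrC.
Qed.

Lemma le_mem_sum (T : eqType) (s : seq T) (F : T -> R) x :
  x \in s -> (forall y, y \in s -> 0 <= F y) -> F x <= \sum_(y <- s) F y.
Proof.
move=> xs hF; rewrite (big_rem x) //= lerDl big_seq sumr_ge0 // => y hy.
exact/hF/(mem_rem hy).
Qed.

Lemma pair_le (T : eqType) (s : seq T) (u w C : T -> R) :
  (forall p, p \in s -> 0 <= u p) -> (forall p, p \in s -> 0 <= w p) ->
  \sum_(p <- s) u p = \sum_(p <- s) w p ->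
  (forall p q, p \in s -> q \in s -> 0 < u p -> C p <= C q) ->
  \sum_(p <- s) u p * C p <= \sum_(p <- s) w p * C p.
Proof.
move=> hu hw hs hC.
have [/hasP[p0 p0s up0]|/hasPn hn] := boolP (has (fun p => 0 < u p) s).
  have eqC : \sum_(p <- s) u p * C p = \sum_(p <- s) u p * C p0.
    rewrite big_seq [RHS]big_seq; apply: eq_bigr => p ps.
    have [up|] := boolP (0 < u p).
      by rewrite (@le_anti _ _ (C p) (C p0)) // !hC.
    rewrite lt_neqAle hu // andbT negbK => /eqP <-; by rewrite !mul0r.
  rewrite eqC -big_distrl /= hs big_distrl /= big_seq [X in _ <= X]big_seq.
  apply: ler_sum => p ps; apply: ler_wpM2l; first exact: hw.
  exact: hC.
have u0 : forall p, p \in s -> u p = 0.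
  by move=> p ps; apply/eqP; rewrite eq_le hu // andbT leNgt hn.
have s0 : \sum_(p <- s) w p = 0.
  by rewrite -hs big_seq big1 // => p /u0.
have w0 : forall p, p \in s -> w p = 0.
  move=> p ps; apply/eqP; rewrite eq_le hw // andbT -s0; exact: le_mem_sum.
rewrite big_seq [X in _ <= X]big_seq !big1 // => p ps; by rewrite ?u0 ?w0 // mul0r.
Qed.

Lemma load_ge0 mu f : feasible mu f -> forall e, 0 <= load f e.
Proof.
move=> [hf _] e; apply: sumr_ge0 => i _; rewrite big_seq_cond sumr_ge0 // => p /andP[hp _].
exact: hf.
Qed.

Definition agree (f g : I -> seq E -> R) := forall i p, p \in paths i -> f i p = g i p.

Lemma load_agree {f g} : agree f g -> forall e, load f e = load g e.
Proof.
move=> hfg e; apply: eq_bigr => i _; rewrite big_seq_cond [RHS]big_seq_cond.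
by apply: eq_bigr => p /andP[hp _]; exact: hfg.
Qed.

Lemma tc_agree c f g : agree f g -> total_cost c f = total_cost c g.
Proof.
move=> hfg; apply: eq_bigr => i _; rewrite big_seq [RHS]big_seq.
apply: eq_bigr => p hp; rewrite hfg //; congr (_ * _).
by apply: eq_bigr => e _; rewrite (load_agree hfg).
Qed.

Lemma tc_cost c c' f : (forall e, c e (load f e) = c' e (load f e)) ->
  total_cost c f = total_cost c' f.
Proof.
move=> hc; apply: eq_bigr => i _; apply: eq_bigr => p _; congr (_ * _).
by apply: eq_bigr => e _; rewrite hc.
Qed.

Lemma feasible_agree mu f g : agree f g -> feasible mu f -> feasible mu g.
Proof.
move=> hfg [h1 h2]; split => [i p hp|i]; first by rewrite -hfg ?h1.
by rewrite -h2 big_seq [RHS]big_seq; apply: eq_bigr => p hp; rewrite hfg.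
Qed.

End Comb.

Section Bern.
Variable R : realType.

Lemma bern (b x y : R) : 0 <= b -> 0 <= x -> 0 <= y ->
  (b + 1) * powR x b * (y - x) <= powR y b * y - powR x b * x.
Proof.
move=> b0 x0 y0.
have [->|bn0] := eqVneq b 0; first by rewrite !powRr0 add0r !mul1r.
have bp : 0 < b by rewrite lt_neqAle eq_sym bn0.
have s0 : 0 < b + 1 by lra.
have sn0 : b + 1 != 0 by rewrite gt_eqF.
have q0 : 0 < (b + 1) / b by rewrite divr_gt0.
have pq : (b + 1)^-1 + ((b + 1) / b)^-1 = 1.
  by rewrite invf_div; field; rewrite sn0.
have := @conjugate_powR R y (powR x b) (b + 1) ((b + 1) / b) y0 (powR_ge0 _ _) s0 q0 pq.
rewrite -powRrM (_ : b * ((b + 1) / b) = b + 1); last by field.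
have eD : forall z : R, 0 <= z -> powR z (b + 1) = powR z b * z.
  move=> z z0; rewrite powRD; last by rewrite (negbTE sn0).
  by rewrite powRr1.
rewrite !eD // => H.
have H' : (b + 1) * (y * powR x b) <= powR y b * y + b * (powR x b * x).
  have := ler_wpM2l (ltW s0) H.
  have -> : (b + 1) * (powR y b * y / (b + 1) + powR x b * x / ((b + 1) / b))
         = powR y b * y + b * (powR x b * x).
    by field; rewrite bn0 sn0.
  by [].
nra.
Qed.

Lemma edge_ineq (t a tau b x y : R) : 0 <= b -> 0 <= a -> 0 <= x -> 0 <= y ->
  (t + a * powR x b) * x / (b + 1) + (tau + b / (b + 1) * t) * x <=
  (t + a * powR y b) * y / (b + 1) + (tau + b / (b + 1) * t) * y
     - (t + a * powR x b + tau) * (y - x).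
Proof.
move=> b0 a0 x0 y0.
have sn0 : b + 1 != 0 by rewrite gt_eqF //; lra.
rewrite -subr_ge0.
have -> : (t + a * powR y b) * y / (b + 1) + (tau + b / (b + 1) * t) * y
     - (t + a * powR x b + tau) * (y - x)
     - ((t + a * powR x b) * x / (b + 1) + (tau + b / (b + 1) * t) * x)
   = a * (powR y b * y - powR x b * x - (b + 1) * powR x b * (y - x)) / (b + 1).
  by field.
apply: divr_ge0; last lra.
by apply: mulr_ge0 => //; rewrite subr_ge0 bern.
Qed.
End Bern.

Section Pot.
Variables (R : realType) (V E I : finType) (src dst : E -> V) (orig dest : I -> V).
Variables (t a : E -> R) (b : R) (tau : E -> R).
Hypothesis hb : 0 <= b.
Hypothesis ha : forall e, 0 <= a e.
Local Notation paths := (paths src dst orig dest).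
Local Notation load := (@load R _ _ _ src dst orig dest).
Local Notation total_cost := (@total_cost R _ _ _ src dst orig dest).
Local Notation feasible := (@feasible R _ _ _ src dst orig dest).
Local Notation c := (bpr t a b).

Definition Tf (h : I -> seq E -> R) :=
  \sum_i \sum_(p <- paths i) h i p * \sum_(e <- p) (tau e + b / (b + 1) * t e).

Lemma potential mu f g : wardrop src dst orig dest (tolled c tau) mu f -> feasible mu g ->
  total_cost c f / (b + 1) + Tf f <= total_cost c g / (b + 1) + Tf g.
Proof.
move=> [hf hW] hg.
have VI : \sum_i \sum_(p <- paths i) f i p * path_cost src dst orig dest (tolled c tau) f p
       <= \sum_i \sum_(p <- paths i) g i p * path_cost src dst orig dest (tolled c tau) f p.
  apply: ler_sum => i _; apply: pair_le.
  - by move=> p; exact: hf.1.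
  - by move=> p; exact: hg.1.
  - by rewrite hf.2 hg.2.
  - move=> p q hp hq hpos; exact: (hW i p q hp hq hpos).
rewrite /Defs.path_cost !edge_exch in VI.
rewrite /Tf /Defs.total_cost /Defs.path_cost !edge_exch.
rewrite !mulr_suml -!big_split /=.
apply: (@le_trans _ _ (\sum_e (c e (load g e) * load g e / (b + 1)
     + (tau e + b / (b + 1) * t e) * load g e
     - tolled c tau e (load f e) * (load g e - load f e)))).
  apply: ler_sum => e _; rewrite /tolled /bpr.
  exact: (@edge_ineq R _ _ _ _ _ _ hb (ha e) (@load_ge0 R V E I src dst orig dest _ _ hf e) (@load_ge0 R V E I src dst orig dest _ _ hg e)).
rewrite sumrB.
have : 0 <= \sum_e tolled c tau e (load f e) * (load g e - load f e).
  under eq_bigr do rewrite mulrBr.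
  by rewrite sumrB subr_ge0.
set S1 := \sum_e _; set S2 := \sum_e _; lra.
Qed.
End Pot.

Section Exist.
Variables (R : realType) (V E I : finType) (src dst : E -> V) (orig dest : I -> V).
Variables (c c' : E -> R -> R).
Hypothesis hcc : forall e x, 0 <= x -> c e x = c' e x.
Hypothesis hc' : forall e, continuous (c' e).
Local Notation paths := (paths src dst orig dest).
Local Notation load := (@load R _ _ _ src dst orig dest).
Local Notation total_cost := (@total_cost R _ _ _ src dst orig dest).
Local Notation feasible := (@feasible R _ _ _ src dst orig dest).

Let N := size (short_seqs E).
Let K := (I * 'I_N.+1)%type.
Let n := #|{: K}|.
Let idx (p : seq E) : 'I_N.+1 := inord (index p (short_seqs E)).
Let rk (i : I) (p : seq E) : 'I_n := enum_rank ((i, idx p) : K).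
Let flow_of (v : 'rV[R]_n) : I -> seq E -> R := fun i p => v ord0 (rk i p).
Let vec_of (g : I -> seq E -> R) : 'rV[R]_n :=
  \row_(j < n) (let: (i, k) := (enum_val j : K) in
          if nth [::] (short_seqs E) k \in paths i
          then g i (nth [::] (short_seqs E) k) else 0).

Let flow_vec g : agree R V E I src dst orig dest (flow_of (vec_of g)) g.
Proof.
move=> i p hp; rewrite /flow_of /vec_of mxE /rk enum_rankK /idx inordK; last first.
  by rewrite ltnS index_size.
by rewrite nth_index ?hp //; exact: (path_short V E I src dst orig dest hp).
Qed.

Let cont_compR (T0 : topologicalType) (g : R -> R) (h : T0 -> R) :
  continuous g -> continuous h -> continuous (fun v => g (h v)).
Proof. by move=> hg hh v; exact: (continuous_comp (hh v) (hg _)). Qed.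

Let J (v : 'rV[R]_n) := total_cost c' (flow_of v).

Let J_cont : continuous J.
Proof.
rewrite /J /Defs.total_cost /Defs.path_cost /Defs.load.
apply: cont_sum => i; apply: cont_sum => p v.
apply: continuousM; first exact: coord_continuous.
apply: cont_sum => e; apply: cont_compR; first exact: hc'.
apply: cont_sum => j; apply: cont_sum => q; exact: coord_continuous.
Qed.

Lemma exists_SO mu f0 : feasible mu f0 ->
  exists fs, system_optimum src dst orig dest c mu fs.
Proof.
move=> hf0.
have mu0 : forall i, 0 <= mu i.
  by move=> i; rewrite -(hf0.2 i) big_seq sumr_ge0 // => p hp; exact: hf0.1.
pose B := \sum_i mu i.
have B0 : 0 <= B by rewrite sumr_ge0.
have muB : forall i, mu i <= B.
  by move=> i; apply: le_mem_sum => //; rewrite mem_index_enum.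
pose box := [set v : 'rV[R]_n | forall j, `[0, B]%classic (v ord0 j)]%classic.
pose Eq := (\bigcap_(i in setT)
   [set v : 'rV[R]_n | \sum_(p <- paths i) v ord0 (rk i p) = mu i])%classic.
pose A := (box `&` Eq)%classic.
have cA : compact A.
  apply: compact_closedI.
    exact: (rV_compact (fun j => @segment_compact R 0 B)).
  apply: closed_bigI => i _.
  apply: (@preimage_closed _ _ (fun v : 'rV[R]_n => \sum_(p <- paths i) v ord0 (rk i p))
                          [set x | x = mu i]%classic); last exact: closed_eq.
  move=> v _; apply: cont_sum => p; exact: coord_continuous.
have inA : forall g, feasible mu g -> A (vec_of g).
  move=> g [g0 gs]; split.
    move=> j /=; rewrite /vec_of mxE; case: (enum_val j) => i k /=.
    rewrite in_itv /=; case: ifP => hp; last by rewrite lexx B0.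
    rewrite g0 //=; apply: le_trans (muB i); rewrite -(gs i).
    by apply: le_mem_sum => // q hq; exact: g0.
  move=> i _ /=; rewrite -(gs i) big_seq [RHS]big_seq.
  by apply: eq_bigr => p hp; exact: (flow_vec g i p hp).
have [vs vsA hmin] := @EVT_min_rV R n J A (ex_intro _ _ (inA _ hf0)) cA
   (continuous_subspaceT (A:=A) J_cont).
exists (flow_of vs).
have hfs : feasible mu (flow_of vs).
  move: vsA; rewrite inE => -[hbox heq]; split.
    move=> i p _; have := hbox (rk i p); rewrite /= in_itv /= => /andP[] //.
  by move=> i; exact: (heq i Logic.I).
split => // g hg.
rewrite (@tc_cost R V E I src dst orig dest c c'); last first.
  by move=> e; apply: hcc; exact: (@load_ge0 R V E I src dst orig dest _ _ hfs e).
rewrite [X in _ <= X](@tc_cost R V E I src dst orig dest c c'); last first.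
  by move=> e; apply: hcc; exact: (@load_ge0 R V E I src dst orig dest _ _ hg e).
rewrite -(@tc_agree R V E I src dst orig dest c' _ _ (flow_vec g)).
apply: (hmin (vec_of g)); rewrite inE; exact: inA.
Qed.
End Exist.

Theorem theorem2 (R : realType) (V E I : finType)
  (src dst : E -> V) (orig dest : I -> V)
  (t a : E -> R) (beta : R)
  (hbeta : 0 <= beta) (ht : forall e, 0 <= t e) (ha : forall e, 0 <= a e)
  (tau : E -> R)
  (htau : forall (i : I) (p p' : seq E),
      Pstar src dst orig dest (bpr t a beta) i p ->
      p' \in paths src dst orig dest i ->
      \sum_(e <- p) (tau e + beta / (beta + 1) * t e)
        <= \sum_(e <- p') (tau e + beta / (beta + 1) * t e)) :
  DIOT src dst orig dest (bpr t a beta) tau.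
Proof.
move=> mu hmu f hW.
have hf := hW.1.
have hc' : forall e, continuous (fun x : R => t e + a e * powR `|x| beta).
  move=> e; apply: (@contD R R (fun=> t e)); first exact: cst_continuous.
  apply: (@contM R R (fun=> a e)); first exact: cst_continuous.
  exact: (@powRabs_cont R beta hbeta).
have hcc : forall e x, 0 <= x -> bpr t a beta e x = t e + a e * powR `|x| beta.
  by move=> e x x0; rewrite /bpr ger0_norm.
have [fs [hfs hopt]] := @exists_SO R V E I src dst orig dest _ _ hcc hc' mu f hf.
split => // g hg.
have P1 := @potential R V E I src dst orig dest t a beta tau hbeta ha mu f fs hW hfs.
have T1 : Tf R V E I src dst orig dest t beta tau fs <= Tf R V E I src dst orig dest t beta tau f.
  apply: ler_sum => i _; apply: pair_le.
  - by move=> p; exact: hfs.1.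
  - by move=> p; exact: hf.1.
  - by rewrite hfs.2 hf.2.
  move=> p q hp hq hpos; apply: (htau i p q) => //; split => //.
  by exists mu, fs; split.
have s0 : 0 < beta + 1 by lra.
have : total_cost src dst orig dest (bpr t a beta) f
       <= total_cost src dst orig dest (bpr t a beta) fs.
  have si : 0 < (beta + 1)^-1 by rewrite invr_gt0.
  rewrite -(ler_pM2r si); lra.
move=> h; exact: le_trans h (hopt g hg).
Qed.
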